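(* Let $E$ be a closed term with $\vdash E:(\neg X\to X)\to X$, where $X$ is a propositional variable. Then for each $\lambda$-variable $x$, each finite sequence of $\lambda$-variables $\bar y$, and each sequence of $\lambda$-variables $(z_i)_{i\in\mathbb N^*}$ such that $x$ and the variables of $\bar y$ are different from every $z_i$, there exist $m\in\mathbb N^*$ and terms $\theta_1,\dots,\theta_m$ such that: $(E\;x)\;\bar y\triangleright^*\underline{\mu}.((x\;\theta_1)\;\bar y)$; $(\theta_k\;z_k)\triangleright^*\underline{\mu}.((x\;\theta_{k+1})\;\bar y)$ for all $1\le k\le m-1$; and $(\theta_m\;z_m)\triangleright^*\underline{\mu}.(z_l\;\bar y)$ for some $1\le l\le m$.
   Context: $\lambda\mu$-terms: $t::= x\mid \lambda x.t\mid (t\;t)\mid \mu a.t\mid (a\;t)$ over disjoint infinite sets of $\lambda$-variables and $\mu$-variables; types built from propositional variables and $\perp$ with $\to$; $\neg A$ denotes $A\to\perp$. Reduction $(\lambda x.u\;v)\triangleright u[x:=v]$, $(\mu a.u\;v)\triangleright\mu a.u[a:=^*v]$ ($u[a:=^*v]$ replaces each subterm $(a\;w)$ of $u$ by $(a\;(w\;v))$), $\triangleright^*$ its reflexive transitive compatible closure. Typing rules: (ax) $\Gamma\vdash x:A;\Delta$ if $x:A\in\Gamma$; ($\to_i$) from $\Gamma,x:A\vdash t:B;\Delta$ infer $\Gamma\vdash\lambda x.t:A\to B;\Delta$; ($\to_e$) from $\Gamma\vdash u:A\to B;\Delta$, $\Gamma\vdash v:A;\Delta$ infer $\Gamma\vdash(u\;v):B;\Delta$;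 ($\mu$) from $\Gamma\vdash t:\perp;\Delta,a:A$ infer $\Gamma\vdash\mu a.t:A;\Delta$; ($\perp$) from $\Gamma\vdash t:A;\Delta,a:A$ infer $\Gamma\vdash(a\;t):\perp;\Delta,a:A$; $\vdash$ means empty contexts. For a sequence $\bar y=y_1\dots y_n$, $t\;\bar y=((t\;y_1)\dots y_n)$. For a term $t$, $M_t$ is the smallest set containing $t$ such that $w\in M_t$ and $a$ a $\mu$-variable imply $\mu a.w\in M_t$ and $(a\;w)\in M_t$; $\underline{\mu}.t$ denotes an arbitrary element of $M_t$ (different occurrences may denote different elements). *)

(* Defs.v *)
(* Lambda-mu calculus with de Bruijn indices; two separate
   index spaces: lambda-variables (Var n) and mu-variables (MApp a t). *)
From Stdlib Require Import List Arith PeanoNat Relations.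
Import ListNotations.

Inductive ty : Type :=
| TVar : nat -> ty
| TBot : ty
| TArr : ty -> ty -> ty.

Definition TNeg (A : ty) : ty := TArr A TBot.

Inductive term : Type :=
| Var  : nat -> term
| Lam  : term -> term
| App  : term -> term -> term
| Mu   : term -> term
| MApp : nat -> term -> term.

Fixpoint lift_l (k : nat) (t : term) : term :=
  match t with
  | Var n => if Nat.leb k n then Var (S n) else Var n
  | Lam u => Lam (lift_l (S k) u)
  | App u v => App (lift_l k u) (lift_l k v)
  | Mu u => Mu (lift_l k u)
  | MApp a u => MApp a (lift_l k u)
  end.

Fixpoint lift_m (k : nat) (t : term) : term :=
  match t with
  | Var n => Var n
  | Lam u => Lam (lift_m k u)
  | App u v => App (lift_m k u) (lift_m k v)
  | Mu u => Mu (lift_m (S k) u)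
  | MApp a u => MApp (if Nat.leb k a then S a else a) (lift_m k u)
  end.

Fixpoint subst_l (k : nat) (u : term) (t : term) : term :=
  match t with
  | Var n => if Nat.eqb n k then u
             else if Nat.ltb k n then Var (pred n) else Var n
  | Lam w => Lam (subst_l (S k) (lift_l 0 u) w)
  | App w1 w2 => App (subst_l k u w1) (subst_l k u w2)
  | Mu w => Mu (subst_l k (lift_m 0 u) w)
  | MApp a w => MApp a (subst_l k u w)
  end.

(* structural substitution t[k :=* v]: every subterm (k w) becomes (k (w v)) *)
Fixpoint msubst (k : nat) (v : term) (t : term) : term :=
  match t with
  | Var n => Var n
  | Lam w => Lam (msubst k (lift_l 0 v) w)
  | App w1 w2 => App (msubst k v w1) (msubst k v w2)
  | Mu w => Mu (msubst (S k) (lift_m 0 v) w)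
  | MApp a w => if Nat.eqb a k then MApp a (App (msubst k v w) v)
                else MApp a (msubst k v w)
  end.

Inductive step : term -> term -> Prop :=
| step_beta : forall u v, step (App (Lam u) v) (subst_l 0 v u)
| step_mu   : forall u v, step (App (Mu u) v) (Mu (msubst 0 (lift_m 0 v) u))
| step_lam  : forall t t', step t t' -> step (Lam t) (Lam t')
| step_appl : forall t t' u, step t t' -> step (App t u) (App t' u)
| step_appr : forall t u u', step u u' -> step (App t u) (App t u')
| step_mu_c : forall t t', step t t' -> step (Mu t) (Mu t')
| step_mapp : forall a t t', step t t' -> step (MApp a t) (MApp a t').

Definition red : term -> term -> Prop := clos_refl_trans term step.

(* Typing  Gamma |- t : A ; Delta  (contexts are lists indexed by de Bruijn) *)
Inductive typing : list ty -> term -> ty -> list ty -> Prop :=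
| ty_ax  : forall G D n A, nth_error G n = Some A -> typing G (Var n) A D
| ty_lam : forall G D A B t, typing (A :: G) t B D -> typing G (Lam t) (TArr A B) D
| ty_app : forall G D A B u v,
    typing G u (TArr A B) D -> typing G v A D -> typing G (App u v) B D
| ty_mu  : forall G D A t, typing G t TBot (A :: D) -> typing G (Mu t) A D
| ty_bot : forall G D a A t,
    nth_error D a = Some A -> typing G t A D -> typing G (MApp a t) TBot D.

(* closedness: no free lambda- or mu-variables
   (l, m = number of enclosing lambda-, resp. mu-binders) *)
Fixpoint closed_at (l m : nat) (t : term) : Prop :=
  match t with
  | Var n => n < l
  | Lam u => closed_at (S l) m u
  | App u v => closed_at l m u /\ closed_at l m v
  | Mu u => closed_at l (S m) u
  | MApp a u => a < m /\ closed_at l m u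
  end.

Definition closed (t : term) : Prop := closed_at 0 0 t.

Definition apps (t : term) (ys : list nat) : term :=
  fold_left (fun acc y => App acc (Var y)) ys t.

(* M_t : smallest set containing t, closed under w |-> mu a.w and w |-> (a w).
   (In de Bruijn form: the mu-prefix may capture free mu-variables of t.) *)
Inductive in_M (t : term) : term -> Prop :=
| inM_base : in_M t t
| inM_mu   : forall w, in_M t w -> in_M t (Mu w)
| inM_mapp : forall a w, in_M t w -> in_M t (MApp a w).

Definition red_to_M (t s : term) : Prop := exists w, red t w /\ in_M s w.

(* Main.v *)
Require Import Defs.
From Stdlib Require Import List Arith Lia FunctionalExtensionality Relations.
Import ListNotations.

Definition upr (r : nat -> nat) (a : nat) : nat :=
  match a with 0 => 0 | S a' => S (r a') end.

Fixpoint ren (r : nat -> nat) (t : term) : term :=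
  match t with
  | Var n => Var n
  | Lam u => Lam (ren r u)
  | App u v => App (ren r u) (ren r v)
  | Mu u => Mu (ren (upr r) u)
  | MApp a u => MApp (r a) (ren r u)
  end.

Definition liftr (k a : nat) : nat := if Nat.leb k a then S a else a.

Lemma lift_m_ren : forall t k, lift_m k t = ren (liftr k) t.
Proof.
  induction t; intros k; simpl; try rewrite IHt; try rewrite IHt1, IHt2; auto.
  f_equal. f_equal. extensionality a. destruct a; unfold upr, liftr; simpl; try destruct (Nat.leb _ _); reflexivity.
Qed.

Lemma ren_comp : forall t r r', ren r (ren r' t) = ren (fun a => r (r' a)) t.
Proof.
  induction t; intros r r'; simpl; try rewrite IHt; try rewrite IHt1, IHt2; auto.
  f_equal. f_equal. extensionality a. destruct a; reflexivity.
Qed.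

Lemma ren_id : forall t, ren (fun a => a) t = t.
Proof.
  induction t; simpl; try rewrite IHt; try rewrite IHt1, IHt2; auto.
  f_equal. rewrite <- IHt at 2. f_equal. extensionality a. destruct a; reflexivity.
Qed.

Lemma ren_lift_l : forall t r c, ren r (lift_l c t) = lift_l c (ren r t).
Proof.
  induction t; intros r c; simpl; try rewrite IHt; try rewrite IHt1, IHt2; auto;
  destruct (Nat.leb c n); reflexivity.
Qed.

Lemma ren_upr_lift_m : forall u r, ren (upr r) (lift_m 0 u) = lift_m 0 (ren r u).
Proof.
  intros. rewrite !lift_m_ren, !ren_comp. f_equal.
Qed.

Ltac leb_cases := repeat (simpl; match goal with
  | |- context [Nat.leb ?a ?b] => destruct (Nat.leb_spec a b)
  | |- context [Nat.eqb ?a ?b] => destruct (Nat.eqb_spec a b)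
  | |- context [Nat.ltb ?a ?b] => destruct (Nat.ltb_spec a b)
  | |- context [match ?n with 0 => _ | S _ => _ end] => destruct n
  end); simpl.

Lemma lift_l_lift_l : forall t c c', c' <= c ->
  lift_l c' (lift_l c t) = lift_l (S c) (lift_l c' t).
Proof.
  induction t; intros c c' H; simpl; try rewrite IHt by lia; try rewrite IHt1, IHt2 by lia; auto.
  leb_cases; try reflexivity; f_equal; lia.
Qed.

Lemma lift_m_lift_l : forall u c, lift_m 0 (lift_l c u) = lift_l c (lift_m 0 u).
Proof. intros. rewrite !lift_m_ren. apply ren_lift_l. Qed.

Lemma subst_lift : forall w k u, subst_l k u (lift_l k w) = w.
Proof.
  induction w; intros k u; simpl; try rewrite IHw; try rewrite IHw1, IHw2; auto.
  leb_cases; try reflexivity; try (f_equal; lia); lia.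
Qed.

Lemma subst_lift_comm : forall w k c u, c <= k ->
  subst_l (S k) (lift_l c u) (lift_l c w) = lift_l c (subst_l k u w).
Proof.
  induction w; intros k c u H; simpl.
  - leb_cases; try reflexivity; try (f_equal; lia); try lia.
  - f_equal. rewrite lift_l_lift_l by lia. apply IHw. lia.
  - f_equal; auto.
  - f_equal. rewrite lift_m_lift_l. apply IHw. lia.
  - f_equal; auto.
Qed.

Lemma lift_msubst : forall w k c v,
  lift_l c (msubst k v w) = msubst k (lift_l c v) (lift_l c w).
Proof.
  induction w; intros k c v; simpl.
  - leb_cases; reflexivity.
  - f_equal. rewrite IHw. f_equal. rewrite (lift_l_lift_l v c 0) by lia. reflexivity.
  - f_equal; auto.
  - f_equal. rewrite IHw. f_equal. symmetry; apply lift_m_lift_l.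
  - destruct (Nat.eqb n k); simpl; rewrite IHw; reflexivity.
Qed.

Lemma ren_subst : forall w r k u, ren r (subst_l k u w) = subst_l k (ren r u) (ren r w).
Proof.
  induction w; intros r k u; simpl.
  - leb_cases; reflexivity.
  - f_equal. rewrite IHw. f_equal. apply ren_lift_l.
  - f_equal; auto.
  - f_equal. rewrite IHw. f_equal. apply ren_upr_lift_m.
  - f_equal; auto.
Qed.

Lemma upr_inj : forall r, (forall a b, r a = r b -> a = b) ->
  forall a b, upr r a = upr r b -> a = b.
Proof.
  intros r H [|a] [|b]; simpl; intros E; try discriminate; auto.
  all: injection E; intros; f_equal; auto.
Qed.

Lemma ren_msubst : forall w r k v, (forall a b, r a = r b -> a = b) ->
  ren r (msubst k v w) = msubst (r k) (ren r v) (ren r w).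
Proof.
  induction w; intros r k v Hr; simpl.
  - reflexivity.
  - f_equal. rewrite IHw by auto. f_equal. apply ren_lift_l.
  - f_equal; auto.
  - f_equal. rewrite IHw by (apply upr_inj; auto). f_equal. apply ren_upr_lift_m.
  - destruct (Nat.eqb_spec n k); destruct (Nat.eqb_spec (r n) (r k)); simpl.
    + rewrite IHw by auto. reflexivity.
    + congruence.
    + apply Hr in e. congruence.
    + rewrite IHw by auto. reflexivity.
Qed.

Lemma msubst_ren_fresh : forall w r k v, (forall a, r a <> k) ->
  msubst k v (ren r w) = ren r w.
Proof.
  induction w; intros r k v Hr; simpl; auto.
  - f_equal. auto.
  - f_equal; auto.
  - f_equal. apply IHw. intros [|a]; simpl; auto.
  - destruct (Nat.eqb_spec (r n) k). exfalso; eapply Hr; eauto.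
    f_equal; auto.
Qed.

Lemma msubst_lift_m0 : forall w v, msubst 0 v (lift_m 0 w) = lift_m 0 w.
Proof. intros. rewrite lift_m_ren. apply msubst_ren_fresh. intros a; unfold liftr; simpl; lia. Qed.

Lemma lift_m0_msubst : forall w k v, lift_m 0 (msubst k v w) = msubst (S k) (lift_m 0 v) (lift_m 0 w).
Proof. intros. rewrite !lift_m_ren. apply ren_msubst. unfold liftr; simpl; intros; lia. Qed.

Lemma lift_m0_subst : forall w k u, lift_m 0 (subst_l k u w) = subst_l k (lift_m 0 u) (lift_m 0 w).
Proof. intros. rewrite !lift_m_ren. apply ren_subst. Qed.

Definition appt (t : term) (l : list term) : term := fold_left App l t.

Lemma appt_app : forall l1 l2 t, appt t (l1 ++ l2) = appt (appt t l1) l2.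
Proof. intros. unfold appt. apply fold_left_app. Qed.

Lemma apps_appt : forall ys t, apps t ys = appt t (map Var ys).
Proof. induction ys; intros; simpl; auto. Qed.

Lemma appt_map : forall (f : term -> term), (forall a b, f (App a b) = App (f a) (f b)) ->
  forall l t, f (appt t l) = appt (f t) (map f l).
Proof. intros f Hf. induction l; intros; simpl; auto. rewrite IHl, Hf. auto. Qed.

Definition upl (s : nat -> term) (n : nat) : term :=
  match n with 0 => Var 0 | S n' => lift_l 0 (s n') end.

Definition cons_s {A} (h : A) (r : nat -> A) (a : nat) : A :=
  match a with 0 => h | S a' => r a' end.

Fixpoint inst (s : nat -> term) (p : nat -> list term) (tau : nat -> nat) (t : term) : term :=
  match t with
  | Var n => s n
  | Lam u => Lam (inst (upl s) (fun a => map (lift_l 0) (p a)) tau u)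
  | App u v => App (inst s p tau u) (inst s p tau v)
  | Mu u => Mu (inst (fun n => lift_m 0 (s n)) (cons_s [] (fun a => map (lift_m 0) (p a))) (upr tau) u)
  | MApp a u => MApp (tau a) (appt (inst s p tau u) (p a))
  end.

Lemma inst_id : forall t, inst Var (fun _ => []) (fun a => a) t = t.
Proof.
  induction t; simpl; auto; f_equal; auto.
  - rewrite <- IHt at 2. f_equal. extensionality n. destruct n; reflexivity.
  - rewrite <- IHt at 2. f_equal. extensionality a. destruct a; reflexivity.
    extensionality a. destruct a; reflexivity.
Qed.

Lemma ren_inst : forall t r s p tau, ren r (inst s p tau t) =
  inst (fun n => ren r (s n)) (fun a => map (ren r) (p a)) (fun a => r (tau a)) t.
Proof.
  induction t; intros r s p tau; simpl; auto.
  - f_equal. rewrite IHt. f_equal.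
    + extensionality n. destruct n; simpl; auto. apply ren_lift_l.
    + extensionality a. rewrite !map_map. apply map_ext. intros; apply ren_lift_l.
  - f_equal; auto.
  - f_equal. rewrite IHt. f_equal.
    + extensionality n. apply ren_upr_lift_m.
    + extensionality a. destruct a; simpl; auto. rewrite !map_map. apply map_ext. intros; apply ren_upr_lift_m.
    + extensionality a. destruct a; reflexivity.
  - f_equal. rewrite (appt_map (ren r)) by reflexivity. rewrite IHt. reflexivity.
Qed.

Lemma subst_inst : forall t k u s p tau, subst_l k u (inst s p tau t) =
  inst (fun n => subst_l k u (s n)) (fun a => map (subst_l k u) (p a)) tau t.
Proof.
  induction t; intros k u s p tau; simpl; auto.
  - f_equal. rewrite IHt. f_equal.
    + extensionality n. destruct n; simpl; auto.
      apply (subst_lift_comm (s n) k 0 u). lia.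
    + extensionality a. rewrite !map_map. apply map_ext. intros.
      apply (subst_lift_comm a0 k 0 u). lia.
  - f_equal; auto.
  - f_equal. rewrite IHt. f_equal.
    + extensionality n. symmetry. apply lift_m0_subst.
    + extensionality a. destruct a; simpl; auto. rewrite !map_map. apply map_ext. intros.
      symmetry. apply lift_m0_subst.
  - f_equal. rewrite (appt_map (subst_l k u)) by reflexivity. rewrite IHt. reflexivity.
Qed.

Lemma beta_inst : forall t u s p tau,
  subst_l 0 u (inst (upl s) (fun a => map (lift_l 0) (p a)) tau t) = inst (cons_s u s) p tau t.
Proof.
  intros. rewrite subst_inst. f_equal.
  - extensionality n. destruct n; simpl; auto. apply subst_lift.
  - extensionality a. rewrite map_map. rewrite <- (map_id (p a)) at 2. apply map_ext.
    intros; apply subst_lift.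
Qed.

Lemma msubst_inst : forall t k v s p tau, msubst k v (inst s p tau t) =
  inst (fun n => msubst k v (s n))
       (fun a => map (msubst k v) (p a) ++ (if Nat.eqb (tau a) k then [v] else [])) tau t.
Proof.
  induction t; intros k v s p tau; simpl; auto.
  - f_equal. rewrite IHt. f_equal.
    + extensionality n. destruct n; simpl; auto. symmetry. apply lift_msubst.
    + extensionality a. rewrite map_app, !map_map.
      f_equal. apply map_ext. intros. symmetry. apply lift_msubst.
      destruct (Nat.eqb (tau a) k); reflexivity.
  - f_equal; auto.
  - f_equal. rewrite IHt. f_equal.
    + extensionality n. symmetry. apply lift_m0_msubst.
    + extensionality a. destruct a; simpl; auto. rewrite map_app, !map_map.
      f_equal. apply map_ext. intros. symmetry. apply lift_m0_msubst.
      destruct (Nat.eqb (tau a) k); reflexivity.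
  - destruct (Nat.eqb (tau n) k).
    + simpl. f_equal. rewrite (appt_map (msubst k v)) by reflexivity. rewrite IHt.
      rewrite appt_app. reflexivity.
    + rewrite app_nil_r. f_equal. rewrite (appt_map (msubst k v)) by reflexivity. rewrite IHt.
      reflexivity.
Qed.

Lemma red_trans : forall a b c, red a b -> red b c -> red a c.
Proof. intros; eapply rt_trans; eauto. Qed.

Lemma red_step : forall a b, step a b -> red a b.
Proof. intros; apply rt_step; auto. Qed.

Lemma red_refl : forall a, red a a.
Proof. intros; apply rt_refl. Qed.

Lemma red_cong : forall (f : term -> term), (forall a b, step a b -> step (f a) (f b)) ->
  forall a b, red a b -> red (f a) (f b).
Proof.
  intros f Hf a b H. induction H.
  - apply rt_step; auto.
  - apply rt_refl.
  - eapply rt_trans; eauto.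
Qed.

Lemma red_appt : forall l a b, red a b -> red (appt a l) (appt b l).
Proof.
  induction l; intros; simpl; auto. apply IHl.
  apply (red_cong (fun t => App t a)); auto. intros; constructor; auto.
Qed.

Lemma red_Mu : forall a b, red a b -> red (Mu a) (Mu b).
Proof. apply red_cong. intros; constructor; auto. Qed.

Lemma red_MApp : forall n a b, red a b -> red (MApp n a) (MApp n b).
Proof. intros n. apply red_cong. intros; constructor; auto. Qed.

Lemma mu_stack : forall pi acc s p1 tau t,
  (forall n v, msubst 0 v (s n) = s n) ->
  (forall a v, map (msubst 0 v) (p1 a) = p1 a) ->
  (forall v, map (msubst 0 v) acc = acc) ->
  red (appt (Mu (inst s (cons_s acc p1) (upr tau) t)) pi)
      (Mu (inst s (cons_s (acc ++ map (lift_m 0) pi) p1) (upr tau) t)).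
Proof.
  induction pi as [|u pi IH]; intros acc s p1 tau t Hs Hp Ha; simpl.
  - rewrite app_nil_r. apply red_refl.
  - eapply red_trans.
    + apply red_appt. apply red_step. apply step_mu.
    + rewrite msubst_inst.
      replace (fun n => msubst 0 (lift_m 0 u) (s n)) with s by (extensionality n; auto).
      replace (fun a => map (msubst 0 (lift_m 0 u)) (cons_s acc p1 a) ++
                        (if Nat.eqb (upr tau a) 0 then [lift_m 0 u] else []))
        with (cons_s (acc ++ [lift_m 0 u]) p1).
      * replace (acc ++ lift_m 0 u :: map (lift_m 0) pi) with ((acc ++ [lift_m 0 u]) ++ map (lift_m 0) pi)
          by (rewrite <- app_assoc; reflexivity).
        apply IH; auto. intros v. rewrite map_app, Ha. simpl. rewrite msubst_lift_m0. reflexivity.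
      * extensionality a. destruct a; simpl.
        -- rewrite Ha. reflexivity.
        -- rewrite Hp, app_nil_r. reflexivity.
Qed.

Inductive Gd (x : nat) (ys : list nat) (z : nat -> nat) : nat -> term -> Prop :=
| Gend : forall j t l, 1 <= l -> l < j -> red_to_M t (apps (Var (z l)) ys) -> Gd x ys z j t
| Gstep : forall j t th, red_to_M t (apps (App (Var x) th) ys) ->
    Gd x ys z (S j) (App th (Var (z j))) -> Gd x ys z j t.

Lemma rtm_back : forall t t' s, red t t' -> red_to_M t' s -> red_to_M t s.
Proof. intros t t' s H [w [H1 H2]]. exists w; split; auto. eapply red_trans; eauto. Qed.

Lemma Gd_back : forall x ys z j t t', red t t' -> Gd x ys z j t' -> Gd x ys z j t.
Proof.
  intros x ys z j t t' H G. inversion G; subst.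
  - eapply Gend; eauto. eapply rtm_back; eauto.
  - eapply Gstep; eauto. eapply rtm_back; eauto.
Qed.

Lemma Gd_mu : forall x ys z j t, Gd x ys z j t -> Gd x ys z j (Mu t).
Proof.
  intros x ys z j t G. inversion G; subst.
  - eapply Gend; eauto. destruct H1 as [w [H1 H2]]. exists (Mu w); split.
    apply red_Mu; auto. constructor; auto.
  - eapply Gstep; eauto. destruct H as [w [H1 H2]]. exists (Mu w); split.
    apply red_Mu; auto. constructor; auto.
Qed.

Lemma Gd_mapp : forall x ys z j a t, Gd x ys z j t -> Gd x ys z j (MApp a t).
Proof.
  intros x ys z j a t G. inversion G; subst.
  - eapply Gend; eauto. destruct H1 as [w [H1 H2]]. exists (MApp a w); split.
    apply red_MApp; auto. constructor; auto.
  - eapply Gstep; eauto. destruct H as [w [H1 H2]]. exists (MApp a w); split.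
    apply red_MApp; auto. constructor; auto.
Qed.

Fixpoint Stk (x : nat) (ys : list nat) (z : nat -> nat) (A : ty) (j : nat) (pi : list term) : Prop :=
  match A with
  | TVar _ => pi = map Var ys
  | TBot => pi = []
  | TArr A1 B => match pi with
                 | [] => False
                 | u :: pi' => (forall r j', j <= j' -> forall pi0, Stk x ys z A1 j' pi0 ->
                                  Gd x ys z j' (appt (ren r u) pi0)) /\ Stk x ys z B j pi'
                 end
  end.

Definition Real x ys z A j u : Prop :=
  forall r j', j <= j' -> forall pi0, Stk x ys z A j' pi0 -> Gd x ys z j' (appt (ren r u) pi0).

Lemma Real_mono : forall x ys z A j j' u, j <= j' -> Real x ys z A j u -> Real x ys z A j' u.
Proof. unfold Real; intros. apply H0; auto. lia. Qed.

Lemma Real_ren : forall x ys z A j u r, Real x ys z A j u -> Real x ys z A j (ren r u).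
Proof. unfold Real; intros. rewrite ren_comp. apply H; auto. Qed.

Lemma Stk_mono : forall x ys z A j j' pi, j <= j' -> Stk x ys z A j pi -> Stk x ys z A j' pi.
Proof.
  induction A; intros j j' pi Hj H; simpl in *; auto.
  destruct pi; auto. destruct H as [H1 H2]. split.
  - intros. apply H1; auto. lia.
  - eapply IHA2; eauto.
Qed.

Lemma Stk_ren : forall x ys z A j pi r, Stk x ys z A j pi -> Stk x ys z A j (map (ren r) pi).
Proof.
  induction A; intros j pi r H; simpl in *; subst; auto.
  - rewrite map_map. reflexivity.
  - destruct pi; auto. destruct H as [H1 H2]. split.
    + apply (Real_ren x ys z A1 j t r H1).
    + auto.
Qed.

Lemma weak_to_real : forall x ys z G0 D t A,
  (forall s p tau j, (forall n B, nth_error G0 n = Some B -> Real x ys z B j (s n)) ->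
     (forall a B, nth_error D a = Some B -> Stk x ys z B j (p a)) ->
     forall pi, Stk x ys z A j pi -> Gd x ys z j (appt (inst s p tau t) pi)) ->
  forall s p tau j, (forall n B, nth_error G0 n = Some B -> Real x ys z B j (s n)) ->
     (forall a B, nth_error D a = Some B -> Stk x ys z B j (p a)) ->
     Real x ys z A j (inst s p tau t).
Proof.
  intros x ys z G0 D t A H s p tau j Hs Hp. unfold Real. intros r j' Hj pi0 Hpi.
  rewrite ren_inst. apply H; auto.
  - intros n B E. apply Real_ren. eapply Real_mono; eauto.
  - intros a B E. apply Stk_ren. eapply Stk_mono; eauto.
Qed.

Lemma adequacy : forall x ys z G0 t A D, typing G0 t A D ->
  forall s p tau j, (forall n B, nth_error G0 n = Some B -> Real x ys z B j (s n)) ->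
     (forall a B, nth_error D a = Some B -> Stk x ys z B j (p a)) ->
     forall pi, Stk x ys z A j pi -> Gd x ys z j (appt (inst s p tau t) pi).
Proof.
  intros x ys z G0 t A D Ht. induction Ht; intros s p tau j Hs Hp pi Hpi; simpl.
  - rewrite <- (ren_id (s n)). apply (Hs n A H (fun a => a) j); auto.
  - destruct pi as [|u pi']; simpl in Hpi; [contradiction|]. destruct Hpi as [Hu Hpi'].
    simpl. eapply Gd_back.
    + apply red_appt. apply red_step. apply step_beta.
    + rewrite beta_inst. apply IHHt; auto.
      intros [|n] B0 E; simpl in E.
      * injection E; intros; subst. exact Hu.
      * apply Hs; auto.
  - change (Gd x ys z j (appt (inst s p tau u) (inst s p tau v :: pi))).
    apply IHHt1; auto. simpl. split; auto.
    apply (weak_to_real x ys z G D v A IHHt2); auto.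
  - eapply Gd_back.
    + apply (mu_stack pi [] _ _ tau t).
      * intros; apply msubst_lift_m0.
      * intros; simpl; rewrite map_map. apply map_ext.
        intros; apply msubst_lift_m0.
      * reflexivity.
    + apply Gd_mu. change (Gd x ys z j (appt (inst (fun n : nat => lift_m 0 (s n)) (cons_s ([] ++ map (lift_m 0) pi) (fun a : nat => map (lift_m 0) (p a))) (upr tau) t) [])). apply IHHt; simpl; auto.
      * intros n B E. rewrite lift_m_ren. apply Real_ren. auto.
      * intros [|a] B E; simpl in E.
        -- injection E; intros; subst. simpl.
           replace (map (lift_m 0) pi) with (map (ren (liftr 0)) pi).
           apply Stk_ren; auto. apply map_ext; intros; symmetry; apply lift_m_ren.
        -- simpl. replace (map (lift_m 0) (p a)) with (map (ren (liftr 0)) (p a)).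
           apply Stk_ren; auto. apply map_ext; intros; symmetry; apply lift_m_ren.
  - simpl in Hpi. subst pi. simpl. apply Gd_mapp.
    rewrite <- (ren_id (inst s p tau t)).
    apply (weak_to_real x ys z G D t A IHHt s p tau j Hs Hp (fun a => a) j); auto.
Qed.

Lemma rtm_refl : forall t, red_to_M t t.
Proof. intros; exists t; split; [apply red_refl | constructor]. Qed.

Lemma x_real : forall x ys z X,
  Real x ys z (TArr (TNeg (TVar X)) (TVar X)) 1 (Var x).
Proof.
  intros x ys z X. unfold Real. intros r j' Hj pi0 Hpi. simpl.
  destruct pi0 as [|th pi']; simpl in Hpi; [contradiction|]. destruct Hpi as [Hth Hpi']. subst pi'.
  simpl. rewrite <- apps_appt. eapply Gstep. apply rtm_refl.
  specialize (Hth (fun a => a) (S j') (le_S _ _ (le_n _)) [Var (z j')]).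
  rewrite ren_id in Hth. apply Hth. simpl. split; auto.
  intros r' k Hk pi Hpi. subst pi. simpl. rewrite <- apps_appt.
  eapply Gend with (l := j'); try lia. apply rtm_refl.
Qed.

Lemma extract : forall x ys z j t, Gd x ys z j t ->
  (exists l, 1 <= l /\ l < j /\ red_to_M t (apps (Var (z l)) ys)) \/
  exists m th, j <= m /\ red_to_M t (apps (App (Var x) (th j)) ys) /\
    (forall k, j <= k -> k <= m - 1 ->
       red_to_M (App (th k) (Var (z k))) (apps (App (Var x) (th (S k))) ys)) /\
    (exists l, 1 <= l /\ l <= m /\ red_to_M (App (th m) (Var (z m))) (apps (Var (z l)) ys)).
Proof.
  intros x ys z j t G. induction G.
  - left. exists l; auto.
  - right. destruct IHG as [[l [H1 [H2 H3]]] | [m [th' [H1 [H2 [H3 H4]]]]]].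
    + exists j, (fun _ => th). repeat split; auto.
      * intros; lia.
      * exists l. repeat split; auto; lia.
    + exists m, (fun k => if Nat.eqb k j then th else th' k). repeat split.
      * lia.
      * rewrite Nat.eqb_refl. auto.
      * intros k Hk1 Hk2. destruct (Nat.eqb_spec k j).
        -- subst k. destruct (Nat.eqb_spec (S j) j); [lia|]. auto.
        -- destruct (Nat.eqb_spec (S k) j); [lia|]. apply H3; lia.
      * destruct (Nat.eqb_spec m j); [lia|]. auto.
Qed.

Theorem mainTheorem9 (E : term) (X : nat)
  (hclosed : closed E)
  (htype : typing nil E (TArr (TArr (TNeg (TVar X)) (TVar X)) (TVar X)) nil)
  (x : nat) (ys : list nat) (z : nat -> nat)
  (hz : forall i, 1 <= i -> z i <> x /\ ~ In (z i) ys) :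
  exists (m : nat) (theta : nat -> term),
    1 <= m /\
    red_to_M (apps (App E (Var x)) ys) (apps (App (Var x) (theta 1)) ys) /\
    (forall k, 1 <= k -> k <= m - 1 ->
       red_to_M (App (theta k) (Var (z k))) (apps (App (Var x) (theta (S k))) ys)) /\
    (exists l, 1 <= l /\ l <= m /\
       red_to_M (App (theta m) (Var (z m))) (apps (Var (z l)) ys)).
Proof.
  assert (G : Gd x ys z 1 (apps (App E (Var x)) ys)).
  { rewrite apps_appt.
    pose proof (adequacy x ys z nil E _ nil htype Var (fun _ => []) (fun a => a) 1) as H.
    rewrite inst_id in H.
    change (Gd x ys z 1 (appt E (Var x :: map Var ys))).
    apply H.
    - intros n B e. destruct n; discriminate.
    - intros a B e. destruct a; discriminate.
    - simpl. split; auto. exact (x_real x ys z X). }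
  destruct (extract x ys z 1 _ G) as [[l [H1 [H2 _]]] | H]; [lia|].
  exact H.
Qed.
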